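(* For $\omega=(\omega_1,\omega_2)\in\{0,1\}^2$ and $E\in\mathbb{R}$, let $A^\omega(E)\in\mathrm{Sp}_2(\mathbb{R})$ be the $4\times4$ real matrix defined by ${}^t(u_1(1),u_2(1),u_1'(1),u_2'(1))=A^\omega(E)\,{}^t(u_1(0),u_2(0),u_1'(0),u_2'(0))$ for every solution $u=(u_1,u_2)$ on $[0,1]$ of the system $-u''+\begin{pmatrix}\omega_1&1\\1&\omega_2\end{pmatrix}u=Eu$. Let $\mathcal{O}\subset\mathrm{Sp}_2(\mathbb{R})$ be a neighborhood of the identity as described in the context. Then for every $E\in(2,+\infty)$ and every $\omega\in\{0,1\}^2$ there exists an integer $m_\omega(E)\ge1$ such that $(A^\omega(E))^{m_\omega(E)}\in\mathcal{O}$.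
   Context: $\mathrm{Sp}_2(\mathbb{R})$ denotes the real symplectic group of $4\times 4$ matrices, with Lie algebra $\mathfrak{sp}_2(\mathbb{R})$. $\mathcal{O}$ is a neighborhood of the identity in $\mathrm{Sp}_2(\mathbb{R})$ on which $\log=\exp^{-1}$ is a well-defined diffeomorphism and such that elements $g_1,\dots,g_m\in\mathcal{O}$ generate a dense subgroup of $\mathrm{Sp}_2(\mathbb{R})$ if and only if $\log g_1,\dots,\log g_m$ generate $\mathfrak{sp}_2(\mathbb{R})$ as a Lie algebra (such a neighborhood exists by a theorem of Breuillard and Gelander). *)

(* Defs.v *)
From HB Require Import structures.
From mathcomp Require Import all_boot all_order all_algebra.
From mathcomp Require Import all_classical all_reals all_analysis.
Set Implicit Arguments. Unset Strict Implicit. Unset Printing Implicit Defensive.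
Import Order.TTheory GRing.Theory Num.Theory.
Import numFieldNormedType.Exports.
Local Open Scope classical_set_scope.
Local Open Scope ring_scope.

(* over an arbitrary R : realType.
   Coordinates on R^4 are (u1, u2, u1', u2'). *)

Section Defs.
Variable R : realType.

Definition Jsymp : 'M[R]_4 := @block_mx R 2 2 2 2 0 1%:M (- 1%:M) 0.

Definition Sp2 : set 'M[R]_4 := [set M | M^T *m Jsymp *m M = Jsymp].

Definition sp2 : set 'M[R]_4 := [set X | X^T *m Jsymp + Jsymp *m X = 0].

Definition mexp (X : 'M[R]_4) : 'M[R]_4 :=
  limn (fun n : nat => \sum_(k < n) (k`!%:R)^-1 *: X ^+ k).

Definition grp_span (s : seq 'M[R]_4) : set 'M[R]_4 :=
  [set g | forall G : set 'M[R]_4,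
     G 1 -> (forall x y, G x -> G y -> G (x * y)) ->
     (forall x, G x -> G (invmx x)) ->
     (forall x, x \in s -> G x) -> G g].

Definition lie_span (s : seq 'M[R]_4) : set 'M[R]_4 :=
  [set Z | forall L : set 'M[R]_4,
     L 0 -> (forall X Y, L X -> L Y -> L (X + Y)) ->
     (forall (a : R) X, L X -> L (a *: X)) ->
     (forall X Y, L X -> L Y -> L (X * Y - Y * X)) ->
     (forall X, X \in s -> L X) -> L Z].

Definition nbhs_id_Sp2 (O : set 'M[R]_4) : Prop :=
  O `<=` Sp2 /\ exists U : set 'M[R]_4, open U /\ U 1 /\ U `&` Sp2 `<=` O.

(* the Breuillard--Gelander neighborhood hypothesis, with lg playing log *)
Definition BG_neighborhood (O : set 'M[R]_4) (lg : 'M[R]_4 -> 'M[R]_4) : Prop :=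
  nbhs_id_Sp2 O /\
  (forall g, O g -> sp2 (lg g) /\ mexp (lg g) = g) /\
  {within O, continuous lg} /\
  (exists V : set 'M[R]_4, open V /\ lg @` O = V `&` sp2) /\
  (forall s : seq 'M[R]_4, (forall g, g \in s -> O g) ->
     (closure (grp_span s) = Sp2 <-> lie_span (map lg s) = sp2)).

Definition state (u1 u2 : R -> R) (t : R) : 'cV[R]_4 :=
  \col_(i < 4) nth 0 [:: u1 t; u2 t; derive1 u1 t; derive1 u2 t] i.

Definition is_solution (w1 w2 : bool) (E : R) (u1 u2 : R -> R) : Prop :=
  forall t : R,
    [/\ derivable u1 t 1, derivable u2 t 1,
        derivable (derive1 u1) t 1 /\ derivable (derive1 u2) t 1,
        - derive1 (derive1 u1) t + w1%:R * u1 t + u2 t = E * u1 t &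
        - derive1 (derive1 u2) t + u1 t + w2%:R * u2 t = E * u2 t].

Definition is_transfer (w1 w2 : bool) (E : R) (A : 'M[R]_4) : Prop :=
  forall u1 u2 : R -> R, is_solution w1 w2 E u1 u2 ->
    state u1 u2 1 = A *m state u1 u2 0.

End Defs.

(* Main.v *)
Require Import Defs.
From HB Require Import structures.
From mathcomp Require Import all_boot all_order all_algebra.
From mathcomp Require Import all_classical all_reals all_analysis.
From mathcomp Require Import ring lra.
Import Order.TTheory GRing.Theory Num.Theory.
Import numFieldNormedType.Exports.
Local Open Scope classical_set_scope.
Local Open Scope ring_scope.

Section S.
Variable R : realType.

Lemma der_lin (k t : R) : is_derive t 1 (fun t : R => k * t) k.
Proof.
have H : is_derive t 1 (k \*: (@id R)) (k *: (1:R)) by exact: is_deriveZ.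
rewrite /GRing.scale /= mulr1 in H. exact: H.
Qed.

Lemma der_cosk (k t : R) : is_derive t 1 (fun t : R => cos (k * t)) (- sin (k * t) * k).
Proof. exact: (is_derive1_comp (f:=cos) (g:=fun t => k*t) _ (der_lin k t)). Qed.
Lemma der_sink (k t : R) : is_derive t 1 (fun t : R => sin (k * t)) (cos (k * t) * k).
Proof. exact: (is_derive1_comp (f:=sin) (g:=fun t => k*t) _ (der_lin k t)). Qed.

Lemma Jent : Jsymp R = \matrix_(i < 4, j < 4) (if ((val i == 0) && (val j == 2)) || ((val i == 1) && (val j == 3)) then 1 else if ((val i == 2) && (val j == 0)) || ((val i == 3) && (val j == 1)) then -1 else 0).
Proof.
apply/matrixP=> i j; rewrite !mxE.
case: splitP => a Ha; rewrite !mxE; case: splitP => b Hb; rewrite ?mxE;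
case: i Ha => [[|[|[|[|//]]]] Hi] /= Ha; case: j Hb => [[|[|[|[|//]]]] Hj] /= Hb;
case: a Ha => [[|[|//]] ?] /= Ha; case: b Hb => [[|[|//]] ?] /= Hb; try discriminate;
rewrite /= ?mxE ?oppr0 //.
Qed.


Definition o0 : 'I_4 := @Ordinal 4 0 isT.
Definition o1 : 'I_4 := @Ordinal 4 1 isT.
Definition o2 : 'I_4 := @Ordinal 4 2 isT.
Definition o3 : 'I_4 := @Ordinal 4 3 isT.

Lemma sum4 (F : 'I_4 -> R) : \sum_(k<4) F k = F o0 + F o1 + F o2 + F o3.
Proof. rewrite !big_ord_recr big_ord0 /= add0r. by congr (_+_+_+_); congr F; apply/val_inj. Qed.

Lemma symp_ent (M : 'M[R]_4) i l : (M^T *m Jsymp R *m M) i l =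
  M o0 i * M o2 l + M o1 i * M o3 l - M o2 i * M o0 l - M o3 i * M o1 l.
Proof. rewrite Jent !mxE !sum4 !mxE !sum4 !mxE /=. ring. Qed.

Definition gf (x y k t : R) := x * cos (k * t) + (y / k) * sin (k * t).
Definition hf (x y k t : R) := y * cos (k * t) - (x * k) * sin (k * t).

Lemma der_g (x y k t : R) : k != 0 -> is_derive t 1 (gf x y k) (hf x y k t).
Proof.
move=> k0.
have H := is_deriveD (is_deriveZ x (der_cosk k t)) (is_deriveZ (y / k) (der_sink k t)).
apply: (is_derive_eq H). rewrite /hf /GRing.scale /=. by field.
Qed.

Lemma der_h (x y k t : R) : k != 0 -> is_derive t 1 (hf x y k) (- k ^+ 2 * gf x y k t).
Proof.
move=> k0; have H := is_deriveB (is_deriveZ y (der_cosk k t)) (is_deriveZ (x * k) (der_sink k t)).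
apply: (is_derive_eq H). rewrite /gf /GRing.scale /=. by field.
Qed.

Definition u2f (c x y k : R) := fun t => c * gf x y k t.
Definition Ev (p q x y : R) : 'cV[R]_4 := \col_(i < 4) nth 0 [:: p * x; q * x; p * y; q * y] i.

Lemma d1g (x y k : R) : k != 0 -> derive1 (gf x y k) = hf x y k.
Proof. move=> k0; apply/funext => t; rewrite derive1E; by case: (der_g x y k t k0). Qed.
Lemma d1h (x y k : R) : k != 0 -> derive1 (hf x y k) = fun t => - k ^+ 2 * gf x y k t.
Proof. move=> k0; apply/funext => t; rewrite derive1E; by case: (der_h x y k t k0). Qed.

Lemma der_u2 (c x y k t : R) : k != 0 -> is_derive t 1 (u2f c x y k) (c * hf x y k t).
Proof. move=> k0; have H := is_deriveZ c (der_g x y k t k0). exact: (is_derive_eq H). Qed.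
Lemma der_v2 (c x y k t : R) : k != 0 ->
  is_derive t 1 (fun t => c * hf x y k t) (c * (- k ^+ 2 * gf x y k t)).
Proof. move=> k0; have H := is_deriveZ c (der_h x y k t k0). exact: (is_derive_eq H). Qed.

Lemma d1u2 (c x y k : R) : k != 0 -> derive1 (u2f c x y k) = fun t => c * hf x y k t.
Proof. move=> k0; apply/funext => t; rewrite derive1E; by case: (der_u2 c x y k t k0). Qed.
Lemma d1v2 (c x y k : R) : k != 0 -> derive1 (fun t => c * hf x y k t) = fun t => c * (- k ^+ 2 * gf x y k t).
Proof. move=> k0; apply/funext => t; rewrite derive1E; by case: (der_v2 c x y k t k0). Qed.

Lemma sol_ok (w1 w2 : bool) (E lam p q k x y : R) : k != 0 ->
  (w1 : nat)%:R * p + q = lam * p -> p + (w2 : nat)%:R * q = lam * q -> k ^+ 2 = E - lam ->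
  is_solution w1 w2 E (u2f p x y k) (u2f q x y k).
Proof.
move=> k0 h1 h2 hk t; rewrite !(d1u2 _ _ _ _ k0) !(d1v2 _ _ _ _ k0).
split.
- by case: (der_u2 p x y k t k0).
- by case: (der_u2 q x y k t k0).
- by split; [case: (der_v2 p x y k t k0) | case: (der_v2 q x y k t k0)].
- rewrite hk /u2f.
  have h0 : ((w1 : nat)%:R * p + q - lam * p) * gf x y k t = 0 by rewrite h1 subrr mul0r.
  move: h0; set g := gf x y k t; set a := (w1 : nat)%:R => h0.
  lra.
- rewrite hk /u2f.
  have h0 : (p + (w2 : nat)%:R * q - lam * q) * gf x y k t = 0 by rewrite h2 subrr mul0r.
  move: h0; set g := gf x y k t; set b := (w2 : nat)%:R => h0.
  lra.
Qed.

Lemma state_sol (p q x y k t : R) : k != 0 ->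
  state (u2f p x y k) (u2f q x y k) t = Ev p q (gf x y k t) (hf x y k t).
Proof. by move=> k0; rewrite /state !(d1u2 _ _ _ _ k0). Qed.

Lemma gf0 (x y k : R) : gf x y k 0 = x.
Proof. by rewrite /gf mulr0 cos0 sin0 mulr1 mulr0 addr0. Qed.
Lemma hf0 (x y k : R) : hf x y k 0 = y.
Proof. by rewrite /hf mulr0 cos0 sin0 mulr1 mulr0 subr0. Qed.

Lemma evol (w1 w2 : bool) (E lam p q k : R) (A : 'M[R]_4) : k != 0 ->
  (w1 : nat)%:R * p + q = lam * p -> p + (w2 : nat)%:R * q = lam * q -> k ^+ 2 = E - lam ->
  is_transfer w1 w2 E A ->
  forall n x y, A ^+ n *m Ev p q x y = Ev p q (gf x y k n%:R) (hf x y k n%:R).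
Proof.
move=> k0 h1 h2 hk hA; elim=> [|n IH] x y.
  by rewrite expr0 mul1mx gf0 hf0.
have e1 : A *m Ev p q x y = Ev p q (gf x y k 1) (hf x y k 1).
  have := hA _ _ (sol_ok w1 w2 E lam p q k x y k0 h1 h2 hk).
  by rewrite !state_sol // gf0 hf0.
rewrite exprSr -mulmxE -mulmxA e1 IH.
congr Ev; rewrite /gf /hf mulrS mulrDr mulr1 cosD sinD; by field.
Qed.

Definition qa (c : R) (i : 'I_4) : R := if (val i == 0)%N || (val i == 2)%N then 1 / (1 + c ^+ 2) else c / (1 + c ^+ 2).
Definition qb (c : R) (i : 'I_4) : R := if (val i == 0)%N || (val i == 2)%N then - c / (1 + c ^+ 2) else 1 / (1 + c ^+ 2).
Definition Xc (q : 'I_4 -> R) (i : 'I_4) : R := if (val i < 2)%N then q i else 0.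
Definition Yc (q : 'I_4 -> R) (i : 'I_4) : R := if (val i < 2)%N then 0 else q i.

Lemma coldecomp (c : R) (i : 'I_4) : col i (1%:M : 'M[R]_4) =
  Ev 1 c (Xc (qa c) i) (Yc (qa c) i) + Ev (- c) 1 (Xc (qb c) i) (Yc (qb c) i).
Proof.
have D0 : 1 + c ^+ 2 != 0.
  by rewrite gt_eqF // ltr_pwDl // sqr_ge0.
apply/matrixP=> r z; rewrite !mxE.
case: i => [[|[|[|[|//]]]] Hi]; case: r => [[|[|[|[|//]]]] Hr];
rewrite /Xc /Yc /qa /qb /= ; by field.
Qed.

Section Mat.
Variables (A : 'M[R]_4) (c k1 k2 : R).
Hypothesis k10 : k1 != 0.
Hypothesis k20 : k2 != 0.
Hypothesis HA1 : forall n x y, A ^+ n *m Ev 1 c x y = Ev 1 c (gf x y k1 n%:R) (hf x y k1 n%:R).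
Hypothesis HA2 : forall n x y, A ^+ n *m Ev (- c) 1 x y = Ev (- c) 1 (gf x y k2 n%:R) (hf x y k2 n%:R).

Definition Phi (n : nat) (i : 'I_4) : 'cV[R]_4 :=
  Ev 1 c (gf (Xc (qa c) i) (Yc (qa c) i) k1 n%:R) (hf (Xc (qa c) i) (Yc (qa c) i) k1 n%:R)
  + Ev (- c) 1 (gf (Xc (qb c) i) (Yc (qb c) i) k2 n%:R) (hf (Xc (qb c) i) (Yc (qb c) i) k2 n%:R).

Lemma entryAn n r i : (A ^+ n) r i = Phi n i r 0.
Proof.
have e : (A ^+ n) r i = (A ^+ n *m col i 1%:M) r 0 by rewrite colE mulmxA mulmx1 -colE mxE.
by rewrite e (coldecomp c) mulmxDr HA1 HA2.
Qed.

Lemma ent1 r i : (1%:M : 'M[R]_4) r i =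
  (Ev 1 c (Xc (qa c) i) (Yc (qa c) i) + Ev (- c) 1 (Xc (qb c) i) (Yc (qb c) i)) r 0.
Proof. rewrite -(coldecomp c). by rewrite [RHS]mxE. Qed.

Lemma An_symp n : (A ^+ n)^T *m Jsymp R *m A ^+ n = Jsymp R.
Proof.
apply/matrixP=> i l.
have eJ : Jsymp R i l = ((1%:M)^T *m Jsymp R *m 1%:M) i l by rewrite trmx1 mul1mx mulmx1.
rewrite eJ !symp_ent !entryAn !ent1 /Phi !mxE /=.
have hc1 := cos2Dsin2 (k1 * n%:R).
have hc2 := cos2Dsin2 (k2 * n%:R).
rewrite /gf /hf.
move: hc1 hc2.
set C1 := cos (k1 * n%:R). set S1 := sin (k1 * n%:R).
set C2 := cos (k2 * n%:R). set S2 := sin (k2 * n%:R).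
set x1 := Xc (qa c) i. set y1 := Yc (qa c) i. set x2 := Xc (qb c) i. set y2 := Yc (qb c) i.
set x1' := Xc (qa c) l. set y1' := Yc (qa c) l. set x2' := Xc (qb c) l. set y2' := Yc (qb c) l.
move=> hc1 hc2.
apply/eqP; rewrite -subr_eq0; apply/eqP.
transitivity ((1 + c ^+ 2) * ((C1 ^+ 2 + S1 ^+ 2 - 1) * (x1 * y1' - y1 * x1') +
   (C2 ^+ 2 + S2 ^+ 2 - 1) * (x2 * y2' - y2 * x2'))).
  by field; rewrite k10 k20.
by rewrite hc1 hc2 subrr !mul0r add0r mulr0.
Qed.

Lemma dg_bound (x y k C S e : R) : `|C - 1| <= e -> `|S| <= e ->
  `|x * C + y / k * S - x| <= (`|x| + `|y / k|) * e.
Proof.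
move=> hC hS.
have -> : x * C + y / k * S - x = x * (C - 1) + y / k * S by ring.
apply: (le_trans (ler_normD _ _)); rewrite mulrDl !normrM.
by apply: lerD; apply: ler_wpM2l.
Qed.

Lemma dh_bound (x y k C S e : R) : `|C - 1| <= e -> `|S| <= e ->
  `|y * C - x * k * S - y| <= (`|y| + `|x * k|) * e.
Proof.
move=> hC hS.
have -> : y * C - x * k * S - y = y * (C - 1) + - (x * k) * S by ring.
apply: (le_trans (ler_normD _ _)); rewrite mulrDl !normrM normrN !normrM.
by apply: lerD; apply: ler_wpM2l.
Qed.

Lemma ev_bound (p q u v M : R) (r : 'I_4) : `|p| <= M -> `|q| <= M ->
  `|Ev p q u v r 0| <= M * (`|u| + `|v|).
Proof.
move=> hp hq.
have hM : 0 <= M by apply: le_trans hp.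
have hu : `|u| <= `|u| + `|v| by rewrite lerDl.
have hv : `|v| <= `|u| + `|v| by rewrite lerDr.
rewrite !mxE; case: r => [[|[|[|[|//]]]] Hr] /=; rewrite normrM;
  by apply: ler_pM => //.
Qed.

Definition Qf (i : 'I_4) : R :=
  `|Xc (qa c) i| + `|Yc (qa c) i / k1| + `|Yc (qa c) i| + `|Xc (qa c) i * k1| +
  (`|Xc (qb c) i| + `|Yc (qb c) i / k2| + `|Yc (qb c) i| + `|Xc (qb c) i * k2|).

Lemma close_entry n (e : R) r i :
  `|cos (k1 * n%:R) - 1| <= e -> `|sin (k1 * n%:R)| <= e ->
  `|cos (k2 * n%:R) - 1| <= e -> `|sin (k2 * n%:R)| <= e ->
  `|(1%:M : 'M[R]_4) r i - (A ^+ n) r i| <= (1 + `|c|) * Qf i * e.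
Proof.
move=> h1 h2 h3 h4.
rewrite distrC entryAn ent1 /Phi.
set x1 := Xc (qa c) i. set y1 := Yc (qa c) i. set x2 := Xc (qb c) i. set y2 := Yc (qb c) i.
have -> : (Ev 1 c (gf x1 y1 k1 n%:R) (hf x1 y1 k1 n%:R) + Ev (- c) 1 (gf x2 y2 k2 n%:R) (hf x2 y2 k2 n%:R)) r 0 -
  (Ev 1 c x1 y1 + Ev (- c) 1 x2 y2) r 0 =
  Ev 1 c (gf x1 y1 k1 n%:R - x1) (hf x1 y1 k1 n%:R - y1) r 0 +
  Ev (- c) 1 (gf x2 y2 k2 n%:R - x2) (hf x2 y2 k2 n%:R - y2) r 0.
  by rewrite !mxE; case: r => [[|[|[|[|//]]]] Hr] /=; ring.
have hM1 : `|1 : R| <= 1 + `|c| by rewrite normr1 lerDl.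
have hMc : `|c| <= 1 + `|c| by rewrite lerDr.
have hMn : `|- c| <= 1 + `|c| by rewrite normrN lerDr.
apply: (le_trans (ler_normD _ _)).
apply: (le_trans (lerD (ev_bound _ _ _ _ _ r hM1 hMc) (ev_bound _ _ _ _ _ r hMn hM1))).
rewrite -mulrDr -mulrA; apply: ler_wpM2l; first by apply: addr_ge0.
have g1 := dg_bound x1 y1 k1 _ _ _ h1 h2.
have g2 := dh_bound x1 y1 k1 _ _ _ h1 h2.
have g3 := dg_bound x2 y2 k2 _ _ _ h3 h4.
have g4 := dh_bound x2 y2 k2 _ _ _ h3 h4.
rewrite /gf /hf /Qf -/x1 -/y1 -/x2 -/y2.
lra.
Qed.
End Mat.

Lemma box_close (N : nat) (z z' : R) : -1 <= z <= 1 -> -1 <= z' <= 1 ->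
  Num.truncn ((z + 1) * N%:R) = Num.truncn ((z' + 1) * N%:R) -> `|z - z'| * N%:R < 1.
Proof.
move=> /andP[z1 z2] /andP[z1' z2'] ht.
have hN : 0 <= (N%:R : R) by apply: ler0n.
have /andP[a1 a2] := truncn_itv (mulr_ge0 (ltac:(lra) : 0 <= z + 1) hN).
have /andP[b1 b2] := truncn_itv (mulr_ge0 (ltac:(lra) : 0 <= z' + 1) hN).
rewrite ht in a1 a2.
move: a1 a2 b1 b2; set t := ((Num.truncn ((z' + 1) * N%:R)).+1)%:R; set t0 := (Num.truncn ((z' + 1) * N%:R))%:R => a1 a2 b1 b2.
have e : t = t0 + 1 by rewrite /t /t0 -addn1 natrD.
case: (lerP 0 (z - z')) => hz; [rewrite ger0_norm // | rewrite ltr0_norm //]; lra.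
Qed.

Definition bx (N : nat) (z : R) : 'I_(N.*2).+1 := inord (Num.truncn ((z + 1) * N%:R)).

Lemma bx_close (N : nat) (z z' : R) : -1 <= z <= 1 -> -1 <= z' <= 1 ->
  bx N z = bx N z' -> `|z - z'| * N%:R < 1.
Proof.
move=> hz hz' he; apply: box_close => //.
have le2 : forall w : R, -1 <= w <= 1 -> (Num.truncn ((w + 1) * N%:R) <= N.*2)%N.
  move=> w /andP[w1 w2]; rewrite truncn_le_nat.
  have hN : 0 <= (N%:R : R) by apply: ler0n.
  have -> : ((N.*2).+1%:R : R) = 2 * N%:R + 1 by rewrite -addn1 natrD -muln2 natrM mulrC.
  nra.
move/(congr1 (@nat_of_ord _)): he; rewrite /bx !inordK //; by rewrite ltnS le2.
Qed.

Lemma rot_close (a b e N : R) : 1 <= N -> 2 < e * N ->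
  `|cos a - cos b| * N < 1 -> `|sin a - sin b| * N < 1 ->
  `|cos (a - b) - 1| <= e /\ `|sin (a - b)| <= e.
Proof.
move=> N1 eN hu hv.
have N0 : 0 <= N by lra.
rewrite -(ger0_norm N0) -normrM ltr_norml in hu.
rewrite -(ger0_norm N0) -normrM ltr_norml in hv.
move/andP: hu => [hu1 hu2]; move/andP: hv => [hv1 hv2].
have ha := cos2Dsin2 a; have hb := cos2Dsin2 b.
have c1 := cos_geN1 b; have c2 := cos_le1 b; have s1 := sin_geN1 b; have s2 := sin_le1 b.
move: hu1 hu2 hv1 hv2 ha hb c1 c2 s1 s2.
rewrite cosB sinB.
set ca := cos a; set cb := cos b; set sa := sin a; set sb := sin b => hu1 hu2 hv1 hv2 ha hb c1 c2 s1 s2.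
set u := ca - cb; set v := sa - sb.
have key : ca * cb + sa * sb - 1 = - ((u ^+ 2 + v ^+ 2) / 2) by rewrite /u /v; lra.
have key2 : sa * cb - ca * sb = v * cb - u * sb by rewrite /u /v; ring.
have hu1' : - 1 < u * N by [].
have hu2' : u * N < 1 by [].
have hv1' : - 1 < v * N by [].
have hv2' : v * N < 1 by [].
have uu : u ^+ 2 * N ^+ 2 < 1 by nra.
have vv : v ^+ 2 * N ^+ 2 < 1 by nra.
have eN2 : 2 < e * N ^+ 2 by nra.
split.
  rewrite key normrN ger0_norm; last by nra.
  nra.
rewrite key2 ler_norml; apply/andP; split; nra.
Qed.

Lemma trig_in (x : R) : (-1 <= cos x <= 1) /\ (-1 <= sin x <= 1).
Proof. by rewrite cos_geN1 cos_le1 sin_geN1 sin_le1. Qed.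

Lemma recur (k1 k2 e : R) : 0 < e -> exists n : nat, (0 < n)%N /\
  `|cos (k1 * n%:R) - 1| <= e /\ `|sin (k1 * n%:R)| <= e /\
  `|cos (k2 * n%:R) - 1| <= e /\ `|sin (k2 * n%:R)| <= e.
Proof.
move=> e0.
set N := (Num.truncn (2 / e)).+1.
have hN : 2 / e < N%:R by apply: truncnS_gt.
have N1 : (1 : R) <= N%:R by rewrite ler1n.
have eN : 2 < e * N%:R.
  by rewrite mulrC -ltr_pdivrMr.
set K := (N.*2).+1.
pose f (m : 'I_(K * K * (K * K)).+1) :=
  ((bx N (cos (k1 * (m : nat)%:R)), bx N (sin (k1 * (m : nat)%:R))),
   (bx N (cos (k2 * (m : nat)%:R)), bx N (sin (k2 * (m : nat)%:R)))).
have ninj : ~ injective f.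
  move=> /leq_card; rewrite !card_prod !card_ord; by rewrite ltnn.
have [m1 [m2 [hne hf]]] : exists m1 m2, m1 != m2 /\ f m1 = f m2.
  apply: contrapT => H; apply: ninj => a b fab; apply/eqP; apply: contrapT => nab.
  by apply: H; exists a, b; split => //; apply/negP.
wlog lt12 : m1 m2 hne hf / (m1 < m2)%N.
  move=> W; case: (ltngtP m1 m2) => h.
  - exact: (W m1 m2).
  - by apply: (W m2 m1) => //; rewrite eq_sym.
  - by move: hne; rewrite (val_inj h) eqxx.
exists (m2 - m1)%N; split; first by rewrite subn_gt0.
move: hf => [/bx_close h1 /bx_close h2 /bx_close h3 /bx_close h4].
have ed : forall k : R, k * (m2 - m1)%:R = k * (m2 : nat)%:R - k * (m1 : nat)%:R.
  by move=> k; rewrite natrB ?mulrBr // ltnW.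
rewrite !ed.
have [C1 S1] := trig_in (k1 * (m1 : nat)%:R).
have [C2 S2] := trig_in (k1 * (m2 : nat)%:R).
have [C3 S3] := trig_in (k2 * (m1 : nat)%:R).
have [C4 S4] := trig_in (k2 * (m2 : nat)%:R).
move: (h1 C1 C2) (h2 S1 S2) (h3 C3 C4) (h4 S3 S4); rewrite !(distrC (_ (_ * (m1 : nat)%:R))) => g1 g2 g3 g4.
have [r1 r2] := rot_close _ _ _ _ N1 eN g1 g2.
have [r3 r4] := rot_close _ _ _ _ N1 eN g3 g4.
by [].
Qed.
End S.

Lemma Qf_ge0 (R : realType) (c k1 k2 : R) i : 0 <= Qf R c k1 k2 i.
Proof. rewrite /Qf; by do ! apply: addr_ge0. Qed.

Theorem proposition1 (R : realType) (O : set 'M[R]_4) (lg : 'M[R]_4 -> 'M[R]_4)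
  (hO : BG_neighborhood O lg)
  (w1 w2 : bool) (E : R) (hE : 2 < E)
  (A : 'M[R]_4) (hA : is_transfer w1 w2 E A) :
  exists m : nat, (1 <= m)%N /\ O (A ^+ m).
Proof.
have [[OSp [U [oU [U1 UO]]]] _] := hO.
set a : R := (w1 : nat)%:R. set b : R := (w2 : nat)%:R.
set s := Num.sqrt ((a - b) ^+ 2 + 4).
have s0 : 0 <= s by apply: sqrtr_ge0.
have s2 : s ^+ 2 = (a - b) ^+ 2 + 4 by rewrite sqr_sqrtr // addr_ge0 // sqr_ge0.
set c := (s - (a - b)) / 2.
have hc : c ^+ 2 + (a - b) * c - 1 = 0 by rewrite /c; lra.
have w01 : forall w : bool, (w : nat)%:R = 0 :> R \/ (w : nat)%:R = 1 :> R by case; [right|left].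
have hl1 : E - (a + c) > 0.
  rewrite /c; move: s2 s0; case: (w01 w1) => ha; case: (w01 w2) => hb; rewrite /a /b ha hb => s2 s0; nra.
have hl2 : E - (b - c) > 0.
  rewrite /c; move: s2 s0; case: (w01 w1) => ha; case: (w01 w2) => hb; rewrite /a /b ha hb => s2 s0; nra.
set k1 := Num.sqrt (E - (a + c)). set k2 := Num.sqrt (E - (b - c)).
have k1p : 0 < k1 by rewrite sqrtr_gt0.
have k2p : 0 < k2 by rewrite sqrtr_gt0.
have k10 : k1 != 0 by rewrite gt_eqF.
have k20 : k2 != 0 by rewrite gt_eqF.
have k1s : k1 ^+ 2 = E - (a + c) by rewrite sqr_sqrtr // ltW.
have k2s : k2 ^+ 2 = E - (b - c) by rewrite sqr_sqrtr // ltW.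
have HA1 := evol R w1 w2 E (a + c) 1 c k1 A k10 (ltac:(rewrite -/a -/b; lra)) (ltac:(rewrite -/a -/b; lra)) k1s hA.
have HA2 := evol R w1 w2 E (b - c) (- c) 1 k2 A k20 (ltac:(rewrite -/a -/b; lra)) (ltac:(rewrite -/a -/b; lra)) k2s hA.
have : nbhs (1 : 'M[R]_4) U by apply: open_nbhs_nbhs; split.
move=> /nbhs_ballP [e e0 He].
set Kt := \sum_(i < 4) (1 + `|c|) * Qf R c k1 k2 i.
have Kt0 : 0 <= Kt by apply: sumr_ge0 => i _; apply: mulr_ge0; [apply: addr_ge0 | apply: Qf_ge0].
set eta := e / (Kt + 1).
have eta0 : 0 < eta by rewrite divr_gt0 //; lra.
have [n [n0 [h1 [h2 [h3 h4]]]]] := recur R k1 k2 eta eta0.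
exists n; split => //.
apply: UO; split; last exact: (An_symp R A c k1 k2 k10 k20 HA1 HA2 n).
apply: He; rewrite /ball /= /mx_ball; split => // i j.
have := close_entry R A c k1 k2 HA1 HA2 n eta i j h1 h2 h3 h4.
have hKi : (1 + `|c|) * Qf R c k1 k2 j <= Kt.
  rewrite /Kt (bigD1 j) //= lerDl; apply: sumr_ge0 => l _.
  by apply: mulr_ge0; [apply: addr_ge0 | apply: Qf_ge0].
have : Kt * eta < e.
  rewrite /eta mulrA ltr_pdivrMr; last lra.
  have : 0 < e by []. nra.
move=> hKe hb.
rewrite /ball /=.
apply: (le_lt_trans hb); apply: (le_lt_trans _ hKe).
by apply: ler_wpM2r => //; apply: ltW.
Qed.
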